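(* Let $n\geq1$ and $\mathcal{P},\mathcal{Q}\in eNNC_{2n}$. Then $\langle\mathcal{P}\rangle=\langle\mathcal{Q}\rangle$ as subcategories of $\overline{\mathcal{C}}_n$ if and only if $\mathcal{P}=\mathcal{Q}$ up to relabelling of blocks.
   Context: Let $k$ be a field, $S$ the unit circle with anticlockwise orientation. Fix a discrete infinite subset $\mathscr{M}\subset S$ such that every limit point of $\mathscr{M}$ is a limit of both an increasing and a decreasing sequence of $\mathscr{M}$ in the cyclic order, with exactly $n$ such limit points (accumulation points) $a_1,\dots,a_n$ in cyclic order (indices mod $n$, $a_0=a_n$); put $\overline{\mathscr{M}}=\mathscr{M}\cup\{a_1,\dots,a_n\}$, and let $(a_i,a_{i+1})$ denote the points of $\mathscr{M}$ strictly between $a_i$ and $a_{i+1}$. Each $x\in\mathscr{M}$ has a cyclic predecessor $x^-$ and successor $x^+$ in $\mathscr{M}$; for accumulation points $a^\pm=a$. An arc of $\overline{\mathscr{M}}$ is an unordered pair $\{x_1,x_2\}\subset\overline{\mathscr{M}}$ with $x_2\ne x_1,x_1^-,x_1^+$; arcs cross if their endpoints strictly alternate cyclically; $\{x_1,x_2\}[1]=\{x_1^-,x_2^-\}$. The Paquette–Yıldırım category $\overline{\mathcal{C}}_n$ is a Hom-finite, $k$-linear, Krull–Schmidt triangulated category with suspension $[1]$ whose indecomposables $X$ correspond bijectively to arcs $\ell_X$ of $\overline{\mathscr{M}}$, with $\ell_{X[1]}=\ell_X[1]$, and $\mathrm{Hom}(X,Y)\cong k$ if $\ell_X$ and $\ell_Y[-1]$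 cross, or both have an endpoint at a common accumulation point with $\ell_Y[-1]$ an anticlockwise rotation of $\ell_X$ about it; $0$ otherwise. A non-exhaustive non-crossing partition of $[m]=\{1,\dots,m\}$ is a collection of pairwise disjoint nonempty subsets (blocks) of $[m]$, not necessarily covering $[m]$, such that whenever $i<k<j<l$ with $i,j$ in a block $B$ and $k,l$ in a block $B'$, $B=B'$. $eNNC_{2n}$ is the set of such partitions of $[2n]$ containing no block $\{i\}$ with $i$ even. For $\mathcal{P}\in eNNC_{2n}$, $\langle\mathcal{P}\rangle\subseteq\overline{\mathcal{C}}_n$ is the additive closure (closed under sums and summands) of indecomposables $X$ with $\ell_X=\{x,y\}$ such that for some block $B\in\mathcal{P}$, $x,y\in\bigcup_{p\in B,\,p\text{ odd}}(a_{(p-1)/2},a_{(p+1)/2})\cup\bigcup_{p\in B,\,p\text{ even}}\{a_{p/2}\}$. *)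

(* Defs.v *)
From mathcomp Require Import all_boot all_order all_algebra.
Set Implicit Arguments. Unset Strict Implicit. Unset Printing Implicit Defensive.
Import GRing.Theory.
Local Open Scope ring_scope.

(* Points of \overline{M}, up to cyclic-order isomorphism.
   [inl i]        (i : 'I_n) is the accumulation point a_{i+1};
   [inr (i, z)]   is the z-th point of M in the segment (a_i, a_{i+1})
                  (with a_0 = a_n); consecutive integers are cyclic
                  successors/predecessors in M.
   Cyclic order: a_n, (a_n,a_1)=seg 0, a_1, seg 1, a_2, ..., seg (n-1), a_n. *)
Definition pt (n : nat) := ('I_n + ('I_n * int))%type.

Definition acc {n} (i : 'I_n) : pt n := inl i.
Definition segpt {n} (i : 'I_n) (z : int) : pt n := inr (i, z).

Definition succ {n} (x : pt n) : pt n :=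
  match x with inl i => inl i | inr (i, z) => inr (i, z + 1) end.
Definition pred_pt {n} (x : pt n) : pt n :=
  match x with inl i => inl i | inr (i, z) => inr (i, z - 1) end.

Definition is_arc {n} (x y : pt n) : bool :=
  [&& y != x, y != pred_pt x & y != succ x].

(* label in [2n] = {1,...,2n} of the region containing x, as a nat:
   label 2i+1 (odd) <-> segment (a_i, a_{i+1}); label 2i+2 (even) <-> a_{i+1}.
   Elements k : 'I_(2*n) of blocks stand for the labels k+1. *)
Definition label {n} (x : pt n) : nat :=
  match x with inl i => (2 * i + 2)%N | inr (i, _) => (2 * i + 1)%N end.

Definition is_eNNC (n : nat) (P : {set {set 'I_(2 * n)}}) : Prop :=
  [/\ (forall B, B \in P -> B != set0),
      (forall B B', B \in P -> B' \in P -> B != B' -> [disjoint B & B']),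
      (forall B B' (i k j l : 'I_(2 * n)), B \in P -> B' \in P ->
          (i < k)%N -> (k < j)%N -> (j < l)%N ->
          i \in B -> j \in B -> k \in B' -> l \in B' -> B = B')
    & (forall k : 'I_(2 * n), [set k] \in P -> odd k.+1)].

Definition in_regions {n} (B : {set 'I_(2 * n)}) (x : pt n) : bool :=
  [exists k in B, k.+1 == label x].

(* The indecomposables of <P>, as the set of arcs {x,y} with x,y in the
   regions of a single block.  (The relation is symmetric, i.e. on
   unordered pairs.) *)
Definition subcat {n} (P : {set {set 'I_(2 * n)}}) : rel (pt n) :=
  fun x y => is_arc x y && [exists B in P, in_regions B x && in_regions B y].

(* Main.v *)
Require Import Defs.
From mathcomp Require Import all_boot all_order all_algebra.
From mathcomp Require Import zify.
Set Implicit Arguments. Unset Strict Implicit. Unset Printing Implicit Defensive.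

Definition blk n (P : {set {set 'I_(2 * n)}}) (k k' : 'I_(2 * n)) : bool :=
  [exists B in P, (k \in B) && (k' \in B)].

Lemma half_lt n (k : 'I_(2 * n)) : (k./2 < n)%N.
Proof. by rewrite ltn_half_double -mul2n. Qed.

Definition half_ord n (k : 'I_(2 * n)) : 'I_n := Ordinal (half_lt k).

Definition ptof n (k : 'I_(2 * n)) (z : int) : pt n :=
  if odd k then inl (half_ord k) else inr (half_ord k, z).

Lemma label_ptof n (k : 'I_(2 * n)) z : label (ptof k z) = k.+1.
Proof.
have := odd_double_half k; rewrite /ptof /label /=.
case: (odd k) => /= h; move: h; rewrite -mul2n; lia.
Qed.

Lemma label_succ n (x : pt n) : label (succ x) = label x.
Proof. by case: x => [|[i z]]. Qed.
Lemma label_pred n (x : pt n) : label (pred_pt x) = label x.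
Proof. by case: x => [|[i z]]. Qed.

Lemma in_regions_ptof n (B : {set 'I_(2 * n)}) k z :
  in_regions B (ptof k z) = (k \in B).
Proof.
rewrite /in_regions label_ptof; apply/existsP/idP.
  by case=> x /andP[xB /eqP [e]]; have -> : k = x by apply: val_inj.
by move=> kB; exists k; rewrite kB eqxx.
Qed.

Lemma subcat_ptof n (P : {set {set 'I_(2 * n)}}) k k' z z' :
  subcat P (ptof k z) (ptof k' z') = is_arc (ptof k z) (ptof k' z') && blk P k k'.
Proof.
rewrite /subcat /blk; congr andb; apply: eq_existsb => B.
by rewrite !in_regions_ptof.
Qed.

Lemma arc_neq n (k k' : 'I_(2 * n)) : k != k' -> is_arc (ptof k 0) (ptof k' 0).
Proof.
move=> ne; rewrite /is_arc; apply/and3P; split; apply/eqP => e.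
- by move: (congr1 label e); rewrite !label_ptof => -[] /val_inj /eqP; rewrite eq_sym (negbTE ne).
- by move: (congr1 label e); rewrite label_pred !label_ptof => -[] /val_inj /eqP; rewrite eq_sym (negbTE ne).
- by move: (congr1 label e); rewrite label_succ !label_ptof => -[] /val_inj /eqP; rewrite eq_sym (negbTE ne).
Qed.

Lemma arc_even n (k : 'I_(2 * n)) : ~~ odd k -> is_arc (ptof k 0) (ptof k 2).
Proof. move=> hk; rewrite /is_arc /ptof (negbTE hk) /=; apply/and3P; split; apply/negP => /eqP [] /eqP; by []. Qed.

Lemma blk_uniq n (P : {set {set 'I_(2 * n)}}) B B' k :
  is_eNNC P -> B \in P -> B' \in P -> k \in B -> k \in B' -> B = B'.
Proof.
case=> _ h2 _ _ BP B'P kB kB'; apply/eqP; apply: contraT => ne.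
by move: (disjointFr (h2 _ _ BP B'P ne) kB); rewrite kB'.
Qed.

Lemma odd_blk n (P : {set {set 'I_(2 * n)}}) (k : 'I_(2 * n)) : is_eNNC P -> odd k ->
  blk P k k = [exists k', (k' != k) && blk P k k'].
Proof.
case=> _ _ _ h4 hk; apply/idP/idP.
  case/existsP => B /and3P[BP kB _].
  have: ~~ (B \subset [set k]).
    apply/negP => sub.
    have eB : B = [set k] by apply/eqP; rewrite eqEsubset sub sub1set kB.
    by move: (h4 k); rewrite -eB BP => /(_ isT); rewrite /= hk.
  case/subsetPn => k' k'B; rewrite in_set1 => nk.
  by apply/existsP; exists k'; rewrite nk /=; apply/existsP; exists B; rewrite BP kB k'B.
case/existsP => k' /andP[_ /existsP[B /and3P[BP kB _]]].
by apply/existsP; exists B; rewrite BP kB.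
Qed.

Lemma blk_eq n (P Q : {set {set 'I_(2 * n)}}) : is_eNNC P -> is_eNNC Q ->
  subcat P =2 subcat Q -> blk P =2 blk Q.
Proof.
move=> hP hQ E.
have neq : forall k k', k != k' -> blk P k k' = blk Q k k'.
  by move=> k k' ne; have := E (ptof k 0) (ptof k' 0); rewrite !subcat_ptof arc_neq.
move=> k k'; case: (eqVneq k k') => [<-|ne]; last exact: neq.
case hk: (odd k).
  rewrite (odd_blk hP hk) (odd_blk hQ hk); apply: eq_existsb => k'' .
  case: (eqVneq k'' k) => //= ne; apply: neq; by rewrite eq_sym.
by have := E (ptof k 0) (ptof k 2); rewrite !subcat_ptof arc_even ?hk.
Qed.

Lemma sub_blk n (P Q : {set {set 'I_(2 * n)}}) : is_eNNC P -> is_eNNC Q ->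
  blk P =2 blk Q -> P \subset Q.
Proof.
move=> hP hQ E; apply/subsetP => B BP.
have [k kB] : exists k, k \in B.
  by case: hP => h1 _ _ _; case/set0Pn: (h1 B BP) => k kB; exists k.
have : blk Q k k by rewrite -E; apply/existsP; exists B; rewrite BP kB.
case/existsP => B' /and3P[B'Q kB' _].
suff -> : B = B' by [].
apply/setP => x; apply/idP/idP => hx.
  have : blk Q k x by rewrite -E; apply/existsP; exists B; rewrite BP kB hx.
  case/existsP => B'' /and3P[B''Q kB'' xB''].
  by rewrite (blk_uniq hQ B'Q B''Q kB' kB'').
have : blk P k x by rewrite E; apply/existsP; exists B'; rewrite B'Q kB' hx.
case/existsP => B'' /and3P[B''P kB'' xB''].
by rewrite (blk_uniq hP BP B''P kB kB'').
Qed.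

Theorem lemma4p7 (n : nat) (hn : (1 <= n)%N) (P Q : {set {set 'I_(2 * n)}}) :
  is_eNNC P -> is_eNNC Q ->
  (subcat P =2 subcat Q <-> P = Q).
Proof.
move=> hP hQ; split; last by move->.
move=> E; have E' := blk_eq hP hQ E.
apply/eqP; rewrite eqEsubset (sub_blk hP hQ E') (sub_blk hQ hP) //.
Qed.
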